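(* Consider a slotted system with diversity. There are $N$ users, $N_{sub}\ge2$ sub-carriers and slots $1,\dots,T$. In each slot the BS chooses a user via $\pi_u$ and a sub-carrier via $\pi_s$; these algorithms may be randomized and history dependent. It then sends an update to that user on that sub-carrier. The adversary uses a blocking matrix $\sigma\in\{0,1\}^{N_{sub}\times T}$, where $\sigma_j(t)=0$ means sub-carrier $j$ is blocked in slot $t$. Feasibility means $\sum_{j,t}(1-\sigma_j(t))\le\alpha T$ and at most one sub-carrier is blocked per slot, where $0<\alpha<1$. Ages satisfy $a_i(1)=1$, $a_i(t+1)=1$ if user $i$ is chosen in slot $t$ on an unblocked sub-carrier, and $a_i(t+1)=a_i(t)+1$ otherwise. Let $\Delta^{\pi_u,\pi_s,\sigma}=\frac1T\sum_{t=1}^T\frac1N\sum_i\mathbb E[a_i(t)]$ and $\Delta^*(T)=\sup_\sigma\inf_{\pi_u,\pi_s}\Delta^{\pi_u,\pi_s,\sigma}$. Let ''unif'' denote choosing, independently in every slot, a uniformly random user and a uniformly random sub-carrier. Then $$\limsup_{T\to\infty}\frac{\sup_\sigma\Delta^{\mathrm{unif},\mathrm{unif},\sigma}}{\Delta^*(T)}\le\frac{2N_{sub}}{N_{sub}-1}.$$ *)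

(* Defs.v *)
From HB Require Import structures.
From mathcomp Require Import all_boot all_order all_algebra.
From mathcomp Require Import boolp classical_sets reals.
Set Implicit Arguments. Unset Strict Implicit. Unset Printing Implicit Defensive.
Import Order.TTheory GRing.Theory Num.Theory.
Local Open Scope ring_scope.
Local Open Scope classical_set_scope.

(* A schedule over slots 0..T-1 (paper's slots 1..T): in each slot, the
   chosen (user, sub-carrier) pair. *)
Definition schedule (N Nsub T : nat) := {ffun 'I_T -> 'I_N * 'I_Nsub}.

(* Blocking matrix: sigma j t = true  <-> sigma_j(t) = 1 (NOT blocked). *)
Definition blocking (Nsub T : nat) := 'I_Nsub -> 'I_T -> bool.

Definition feasible {R : realType} (Nsub T : nat) (alpha : R)
  (sigma : blocking Nsub T) : Prop :=
  ((\sum_(j < Nsub) \sum_(t < T) (~~ sigma j t : nat))%:R <= alpha * T%:R)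
  /\ (forall t : 'I_T, #|[set j : 'I_Nsub | ~~ sigma j t]| <= 1)%N.

(* age s sigma i k = a_i(k+1): a_i(1) = 1, a_i(t+1) = 1 if user i is chosen
   in slot t on an unblocked sub-carrier, a_i(t)+1 otherwise. *)
Fixpoint age (N Nsub T : nat) (s : schedule N Nsub T) (sigma : blocking Nsub T)
  (i : 'I_N) (k : nat) : nat :=
  match k with
  | 0 => 1
  | k'.+1 =>
      match (insub k' : option 'I_T) with
      | Some t => if ((s t).1 == i) && sigma (s t).2 t then 1
                  else (age s sigma i k').+1
      | None => (age s sigma i k').+1
      end
  end.

Definition avg_age {R : realType} (N Nsub T : nat) (s : schedule N Nsub T)
  (sigma : blocking Nsub T) : R :=
  T%:R^-1 * \sum_(t < T) (N%:R^-1 * \sum_(i < N) (age s sigma i t)%:R).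

(* A (possibly randomized, history dependent) pair of policies (pi_u, pi_s)
   facing a fixed blocking matrix induces a probability distribution on the
   finite set of schedules; conversely every such distribution is realized
   by some randomized policy. *)
Definition is_dist {R : realType} (N Nsub T : nat)
  (p : {ffun schedule N Nsub T -> R}) : Prop :=
  (forall s, 0 <= p s) /\ \sum_s p s = 1.

Definition cost {R : realType} (N Nsub T : nat)
  (p : {ffun schedule N Nsub T -> R}) (sigma : blocking Nsub T) : R :=
  \sum_s p s * avg_age s sigma.

Definition unif_dist {R : realType} (N Nsub T : nat) : {ffun schedule N Nsub T -> R} :=
  [ffun s => \prod_(t < T) (N%:R^-1 * Nsub%:R^-1)].

Definition Delta_star {R : realType} (N Nsub T : nat) (alpha : R) : R :=
  sup [set d | exists sigma : blocking Nsub T, feasible alpha sigma /\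
        d = inf [set x | exists p : {ffun schedule N Nsub T -> R},
                          is_dist p /\ x = cost p sigma]].

Definition Delta_unif {R : realType} (N Nsub T : nat) (alpha : R) : R :=
  sup [set d | exists sigma : blocking Nsub T, feasible alpha sigma /\
        d = cost (@unif_dist R N Nsub T) sigma].

(* Main.v *)
Require Import Defs.
From HB Require Import structures.
From mathcomp Require Import all_boot all_order all_algebra.
From mathcomp Require Import boolp classical_sets reals.
From mathcomp Require Import zify ring lra.
Import Order.TTheory GRing.Theory Num.Theory.
Set Implicit Arguments. Unset Strict Implicit. Unset Printing Implicit Defensive.
Lemma count_itv a b n : \sum_(t < n) (a <= t < b : nat) = minn n b - a.
Proof.
elim: n => [|n IH]; first by rewrite big_ord0 min0n.
rewrite big_ord_recr /= IH.
case: (leqP a n) => Han; case: (ltnP n b) => Hnb /=; lia.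
Qed.

Lemma sum_rev N : 2 * \sum_(d < N) (N - d) = N * N.+1.
Proof.
elim: N => [|N IH]; first by rewrite big_ord0.
rewrite big_ord_recl /= subn0.
under eq_bigr => i _ do rewrite /bump /= add1n subSS.
rewrite mulnDr IH; lia.
Qed.

Lemma sum_lin (h : nat -> nat) N c T :
  (forall k, N <= k.+1 -> c <= 2 * h k) -> (T - N.-1) * c <= 2 * \sum_(k < T) h k.
Proof.
move=> H; elim: T => [|T IH]; first by rewrite sub0n.
rewrite big_ord_recr /= mulnDr.
case: (leqP N T.+1) => HN.
  have Hh := H T HN; rewrite subSn; last by lia.
  rewrite (mulSn (T - N.-1)) addnC; exact: leq_add.
have -> : T.+1 - N.-1 = 0 by apply/eqP; rewrite subn_eq0 -ltnS prednK //; lia.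
by rewrite mul0n.
Qed.

Section S.
Variables (N Nsub T : nat) (s : schedule N Nsub T) (sigma : blocking Nsub T).

Lemma age_last i k : age s sigma i k <= k ->
  exists t : 'I_T, (t + age s sigma i k = k)%N /\ (s t).1 = i.
Proof.
elim: k => [|k IH] /=; first by [].
case: insubP => [t Hk Ht|Hk].
  case: ifP => [/andP[/eqP Hi _] _|_ Hle].
    by exists t; rewrite Ht addn1.
  have [t' [H1 H2]] := IH Hle; exists t'; split => //; rewrite addnS H1.
  done.
move=> Hle; have [t' [H1 H2]] := IH Hle; exists t'; split => //; rewrite addnS H1.
done.
Qed.


Lemma age_pos i k : 0 < age s sigma i k.
Proof. by case: k => [|k] //=; case: insubP => [t _ _|_] //; case: ifP. Qed.

Lemma count_young k d : d <= k -> \sum_(i < N) (age s sigma i k <= d : nat) <= d.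
Proof.
move=> Hdk.
apply: (@leq_trans (\sum_(i < N) \sum_(t < T) (((s t).1 == i) * (k - d <= t < k)))).
  apply: leq_sum => i _.
  case Ha: (age s sigma i k <= d) => //.
  have Hp := age_pos i k.
  have [t [H1 H2]] := age_last (leq_trans Ha Hdk).
  rewrite (bigD1 t) //= H2 eqxx mul1n.
  have -> : (k - d <= t < k) = true by apply/andP; split; lia.
  exact: leq_addr.
rewrite exchange_big /=.
apply: (@leq_trans (\sum_(t < T) (k - d <= t < k : nat))); last first.
  by rewrite count_itv; lia.
apply: leq_sum => t _.
rewrite (bigD1 (s t).1) //= eqxx mul1n big1 ?addn0 // => j /negbTE Hj.
by rewrite eq_sym Hj.
Qed.

Lemma time_lb k : N <= k.+1 -> N * N.+1 <= 2 * \sum_(i < N) age s sigma i k.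
Proof.
move=> Hk.
apply: (@leq_trans (2 * \sum_(i < N) \sum_(d < N) (0 <= d < age s sigma i k : nat))); last first.
  rewrite leq_mul2l; apply/orP; right; apply: leq_sum => i _.
  rewrite count_itv; lia.
rewrite exchange_big /= -sum_rev leq_mul2l; apply/orP; right.
apply: leq_sum => d _.
have Hd : d <= k by have := ltn_ord d; lia.
have := count_young Hd.
have Htot : \sum_(i < N) ((d < age s sigma i k : nat) + (age s sigma i k <= d : nat)) = N.
  rewrite (eq_bigr (fun _ => 1)) ?sum_nat_const ?card_ord ?muln1 // => i _.
  by case: leqP.
rewrite big_split /= in Htot.
move: Htot; set x := \sum_(i < N) (d < _ : nat); set y := \sum_(i < N) (_ <= d : nat).
move=> Htot Hy; rewrite leq_subLR; apply: (@leq_trans (y + x)); first by rewrite addnC Htot.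
by rewrite leq_add2r.
Qed.

End S.

Lemma arith N T : N * N <= T -> N * N * T <= (T - N.-1) * (N * N.+1).
Proof.
move=> HT; have [e ->] : exists e, T = N * N + e by exists (T - N * N); lia.
case: N HT => [|n] HT //=.
have -> : n.+1 * n.+1 + e - n = n * n + n + 1 + e by lia.
nia.
Qed.

Lemma tot_lb N Nsub T (s : schedule N Nsub T) (sigma : blocking Nsub T) :
  N * N <= T -> N * N * T <= 2 * \sum_(k < T) \sum_(i < N) age s sigma i k.
Proof.
move=> HT.
have H := @sum_lin (fun k => \sum_(i < N) age s sigma i k) N (N * N.+1) T
  (fun k Hk => time_lb s sigma Hk).
apply: leq_trans H.
exact: arith.
Qed.

Local Open Scope ring_scope.

Lemma avg_lb (R : realType) N Nsub T (s : schedule N Nsub T) (sigma : blocking Nsub T) :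
  (0 < N)%N -> (N * N <= T)%N -> N%:R / 2 <= (avg_age s sigma : R).
Proof.
move=> HN HT.
have HT0 : (0 < T)%N by apply: leq_trans HT; rewrite muln_gt0 HN.
rewrite /avg_age.
under eq_bigr => k _ do rewrite -natr_sum.
rewrite -mulr_sumr -natr_sum mulrA -invfM.
rewrite ler_pdivlMl ?mulr_gt0 ?ltr0n // mulrA ler_pdivrMr ?ltr0n //.
have := tot_lb s sigma HT.
set S := \sum_(k < T) _ => H.
rewrite -!natrM ler_nat; clearbody S.
lia.
Qed.
Local Close Scope ring_scope.
Section U.
Variables (N Nsub T : nat) (sigma : blocking Nsub T).
Local Notation sch := (schedule N Nsub T).

Definition upd (s : sch) (k : 'I_T) (x : 'I_N * 'I_Nsub) : sch :=
  [ffun t => if t == k then x else s t].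

Lemma age_agree (s s' : sch) i k :
  (forall t : 'I_T, (t < k)%N -> s t = s' t) -> age s sigma i k = age s' sigma i k.
Proof.
elim: k => [|k IH] H //=.
have IH' : age s sigma i k = age s' sigma i k by apply: IH => t Ht; apply: H; lia.
case: insubP => [t _ Ht|_]; last by rewrite IH'.
by rewrite H ?Ht // IH'.
Qed.

Lemma age_upd (s : sch) (k : 'I_T) x i :
  age (upd s k x) sigma i k.+1 =
  if (x.1 == i) && sigma x.2 k then 1 else (age s sigma i k).+1.
Proof.
rewrite /=; case: insubP => [t _ Ht|]; last by rewrite ltn_ord.
have -> : t = k by apply: val_inj.
rewrite /upd ffunE eqxx (@age_agree (upd s k x) s) // => t' Ht'.
rewrite /upd ffunE; case: eqP => // E; by move: Ht'; rewrite E ltnn.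
Qed.

Lemma swap_sum (F : sch -> nat) (k : 'I_T) :
  (N * Nsub) * \sum_s F s = \sum_s \sum_x F (upd s k x).
Proof.
rewrite pair_bigA /=.
pose h (p : sch * ('I_N * 'I_Nsub)) := (upd p.1 k p.2, p.1 k).
have hK : involutive h.
  move=> [s x]; rewrite /h /=; congr pair; last by rewrite /upd ffunE eqxx.
  by apply/ffunP => t; rewrite /upd !ffunE; case: eqP => // ->.
rewrite (reindex_inj (inv_inj hK)) /=.
rewrite (eq_bigr (fun j => F j.1)); last first.
  move=> [s x] _ /=; congr F.
  by apply/ffunP => t; rewrite /upd !ffunE; case: eqP => // ->.
rewrite -(pair_bigA _ (fun s (_ : 'I_N * 'I_Nsub) => F s)) /=.
rewrite big_distrr /=; apply: eq_bigr => s _.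
by rewrite sum_nat_const card_prod !card_ord mulnC.
Qed.

Lemma inner_bound i (k : 'I_T) a :
  (\sum_(j < Nsub) (~~ sigma j k : nat) <= 1)%N ->
  (\sum_(x : 'I_N * 'I_Nsub) (if (x.1 == i) && sigma x.2 k then 1 else a.+1)
     <= N * Nsub + (N * Nsub - (Nsub - 1)) * a)%N.
Proof.
move=> Hb.
have E1 : forall x : 'I_N * 'I_Nsub,
  (if (x.1 == i) && sigma x.2 k then 1 else a.+1) = 1 + (~~ ((x.1 == i) && sigma x.2 k) : nat) * a.
  by move=> x; case: ifP => _ /=; rewrite ?mul0n ?mul1n ?add1n ?addn0.
rewrite (eq_bigr _ (fun x _ => E1 x)) big_split /= sum_nat_const card_prod !card_ord muln1.
rewrite -big_distrl /= leq_add2l; apply: leq_mul => //.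
have Htot : (\sum_(x : 'I_N * 'I_Nsub) (~~ ((x.1 == i) && sigma x.2 k) : nat)
   + \sum_(x : 'I_N * 'I_Nsub) (((x.1 == i) && sigma x.2 k) : nat) = N * Nsub)%N.
  rewrite -big_split /= (eq_bigr (fun _ => 1%N)) ?sum_nat_const ?card_prod ?card_ord ?muln1 //.
  by move=> x _; case: (_ && _).
have Hs : (\sum_(x : 'I_N * 'I_Nsub) (((x.1 == i) && sigma x.2 k) : nat)
   = \sum_(j < Nsub) (sigma j k : nat))%N.
  rewrite -(pair_bigA _ (fun u j => (((u == i) && sigma j k) : nat))) /=.
  rewrite (bigD1 i) //= [X in (_ + X)%N]big1 ?addn0.
    by apply: eq_bigr => j _; rewrite eqxx.
  move=> u /negbTE Hu; apply: big1 => j _; by rewrite Hu.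
have Hs2 : (\sum_(j < Nsub) (sigma j k : nat) + \sum_(j < Nsub) (~~ sigma j k : nat) = Nsub)%N.
  rewrite -big_split /= (eq_bigr (fun _ => 1%N)) ?sum_nat_const ?card_ord ?muln1 //.
  by move=> j _; case: (sigma j k).
move: Htot Hs Hs2 Hb.
set A := \sum_(x : 'I_N * 'I_Nsub) (~~ _ : nat).
set B := \sum_(x : 'I_N * 'I_Nsub) (_ : nat).
set C := \sum_(j < Nsub) (sigma j k : nat).
set D := \sum_(j < Nsub) (~~ sigma j k : nat).
clearbody A B C D.
lia.
Qed.


Hypothesis Hb : forall k : 'I_T, (\sum_(j < Nsub) (~~ sigma j k : nat) <= 1)%N.

Lemma step i (k : 'I_T) :
  (N * Nsub * \sum_(s : sch) age s sigma i k.+1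
   <= N * Nsub * #|{: sch}| + (N * Nsub - (Nsub - 1)) * \sum_(s : sch) age s sigma i k)%N.
Proof.
rewrite (swap_sum _ k).
under eq_bigr => s _ do under eq_bigr => x _ do rewrite age_upd.
apply: (@leq_trans (\sum_(s : sch) (N * Nsub + (N * Nsub - (Nsub - 1)) * age s sigma i k))); first by apply: leq_sum => s _; exact: (inner_bound i _ (Hb k)).
by rewrite big_split /= sum_nat_const -big_distrr /= mulnC.
Qed.

Lemma bound i k : (0 < N)%N -> (1 <= Nsub)%N -> (k <= T)%N ->
  ((Nsub - 1) * \sum_(s : sch) age s sigma i k <= #|{: sch}| * (N * Nsub))%N.
Proof.
move=> HN HNs; elim: k => [|k IH] Hk.
  rewrite /= sum_nat_const muln1 mulnC leq_mul2l; apply/orP; right.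
  rewrite -[X in (X <= _)%N]mul1n; apply: leq_mul => //; exact: leq_subr.
have Hk' : (k < T)%N by [].
have := step i (Ordinal Hk'); rewrite /=.
have := IH (ltnW Hk).
set X := (N * Nsub)%N.
set S1 := \sum_(s : sch) age s sigma i k.+1.
set S0 := \sum_(s : sch) age s sigma i k.
set M := #|{: sch}|.
have HX : (Nsub - 1 <= X)%N by rewrite /X; nia.
have HX0 : (0 < X)%N by rewrite /X; nia.
clearbody X S1 S0 M.
move=> H1 H2.
rewrite -(leq_pmul2l HX0).
have [D HD] : exists D, X = (D + (Nsub - 1))%N by exists (X - (Nsub - 1))%N; lia.
move: H1 H2; rewrite HD addnK; set c := (Nsub - 1)%N; clearbody c; move=> H1 H2.
nia.
Qed.

End U.

Local Open Scope ring_scope.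

Lemma feas_Hb (R : realType) Nsub T (alpha : R) (sigma : blocking Nsub T) :
  feasible alpha sigma -> forall k : 'I_T, (\sum_(j < Nsub) (~~ sigma j k : nat) <= 1)%N.
Proof.
move=> [_ H] k; apply: leq_trans (H k).
rewrite -sum1_card big_mkcond /=.
rewrite [X in (_ <= X)%N]big_mkcond; apply: eq_leq; apply: eq_bigr => j _ /=.
have -> : (j \in [set j | ~~ sigma j k]%classic) = ~~ sigma j k by apply/idP/idP => [/set_mem|/mem_set].
by case: (sigma j k).
Qed.

Lemma unif_cost_le (R : realType) N Nsub T (alpha : R) (sigma : blocking Nsub T) :
  (0 < N)%N -> (2 <= Nsub)%N -> feasible alpha sigma ->
  cost (@unif_dist R N Nsub T) sigma <= N%:R * Nsub%:R / (Nsub%:R - 1).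
Proof.
move=> HN HNs Hf.
have Hb := feas_Hb Hf.
have HU : 0 <= N%:R * Nsub%:R / (Nsub%:R - 1) :> R.
  rewrite divr_ge0 // ?mulr_ge0 // subr_ge0 ler1n; lia.
rewrite /cost /avg_age.
under eq_bigr => s _ do rewrite ffunE prodr_const card_ord.
set P := (N%:R^-1 * Nsub%:R^-1) ^+ T.
under eq_bigr => s _ do under eq_bigr => k _ do rewrite -natr_sum.
under eq_bigr => s _ do rewrite -mulr_sumr -natr_sum.
rewrite -mulr_sumr. 
under eq_bigr => s _ do rewrite mulrA.
rewrite -mulr_sumr -natr_sum.
rewrite exchange_big /=.
under eq_bigr => k _ do rewrite exchange_big /=.
set tot := (\sum_(k < T) \sum_(i < N) \sum_(s : schedule N Nsub T) age s sigma i k)%N.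
set M := #|{: schedule N Nsub T}|.
have Htot : ((Nsub - 1) * tot <= T * N * (M * (N * Nsub)))%N.
  rewrite /tot big_distrr /=.
  apply: (@leq_trans (\sum_(k < T) (N * (M * (N * Nsub))))%N); last by rewrite sum_nat_const card_ord mulnA.
  apply: leq_sum => k _; rewrite big_distrr /=.
  apply: (@leq_trans (\sum_(i < N) (M * (N * Nsub)))%N); last by rewrite sum_nat_const card_ord.
  apply: leq_sum => i _; apply: bound => //; first lia.
  exact: ltnW (ltn_ord k).
clearbody tot.
have HM : M = ((N * Nsub) ^ T)%N by rewrite /M card_ffun card_prod !card_ord.
have PM : P * M%:R = 1.
  rewrite HM natrX /P -exprMn natrM.
  rewrite [X in X ^+ _](_ : _ = 1) ?expr1n //.
  field; rewrite ?pnatr_eq0; apply/andP; split; lia.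
case: (posnP T) => HT.
  by rewrite HT invr0 !mul0r mulr0.
have HNs' : 0 < Nsub%:R - 1 :> R by rewrite subr_gt0 ltr1n.
have E : N%:R * Nsub%:R / (Nsub%:R - 1) =
   P * (T%:R^-1 * N%:R^-1 * ((T * N * (M * (N * Nsub)))%:R / (Nsub%:R - 1))) :> R.
  rewrite !natrM.
  have HT' : T%:R != 0 :> R by rewrite pnatr_eq0 -lt0n.
  have HN' : N%:R != 0 :> R by rewrite pnatr_eq0 -lt0n.
  rewrite -[LHS]mul1r -{1}PM.
  field; apply/and3P; split => //; exact: lt0r_neq0.
rewrite E; apply: ler_wpM2l; first by rewrite /P exprn_ge0 // mulr_ge0 // invr_ge0.
apply: ler_wpM2l; first by rewrite mulr_ge0 // invr_ge0.
rewrite ler_pdivlMr // -(natrB _ (ltnW HNs)) -natrM ler_nat mulnC; exact: Htot.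
Qed.

Lemma unif_is_dist (R : realType) N Nsub T :
  (0 < N)%N -> (0 < Nsub)%N -> is_dist (@unif_dist R N Nsub T).
Proof.
move=> HN HNs.
have P0 : 0 <= (N%:R^-1 * Nsub%:R^-1 : R) by rewrite mulr_ge0 // invr_ge0.
split.
  by move=> s; rewrite ffunE prodr_const exprn_ge0.
under eq_bigr => s _ do rewrite ffunE prodr_const card_ord.
rewrite sumr_const card_ffun card_prod !card_ord -(mulr_natr _ ((N * Nsub) ^ T)) natrX natrM -exprMn.
rewrite [X in X ^+ _](_ : _ = 1) ?expr1n //.
field; apply/andP; split; rewrite pnatr_eq0 -lt0n //.
Qed.

Lemma cost_lb (R : realType) N Nsub T (p : {ffun schedule N Nsub T -> R}) sigma :
  (0 < N)%N -> (N * N <= T)%N -> is_dist p -> N%:R / 2 <= cost p sigma.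
Proof.
move=> HN HT [p0 p1].
rewrite /cost; apply: (@le_trans _ _ (\sum_s p s * (N%:R / 2))).
  by rewrite -mulr_suml p1 mul1r.
apply: ler_sum => s _; apply: ler_wpM2l => //; exact: avg_lb.
Qed.

Theorem theorem11 (R : realType) (N Nsub : nat) (alpha : R)
  (hN : (0 < N)%N) (hNsub : (2 <= Nsub)%N) (ha0 : 0 < alpha) (ha1 : alpha < 1) :
  forall eps : R, 0 < eps ->
  exists T0 : nat, forall T : nat, (T0 <= T)%N ->
    @Delta_unif R N Nsub T alpha / @Delta_star R N Nsub T alpha
      <= (2 * Nsub%:R) / (Nsub%:R - 1) + eps.
Proof.
move=> eps heps; exists (N * N)%N => T HT.
set U : R := N%:R * Nsub%:R / (Nsub%:R - 1).
have HU : 0 <= U by rewrite divr_ge0 // ?mulr_ge0 // subr_ge0 ler1n; lia.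
pose sigma0 : blocking Nsub T := fun _ _ => true.
have Hf0 : feasible alpha sigma0.
  split.
    rewrite (eq_bigr (fun _ => 0%N)) ?big_const_ord ?iter_addn_0 ?mul0r.
      by rewrite mulr_ge0 // ltW.
    by move=> j _; rewrite big1.
  move=> t; rewrite (@eq_card _ _ pred0) ?card0 // => j.
  by apply/negbTE/negP => /set_mem.
have Hunif : @Delta_unif R N Nsub T alpha <= U.
  apply: ge_sup.
    by exists (cost (@unif_dist R N Nsub T) sigma0); exists sigma0; split.
  by move=> d [sigma [Hf ->]]; exact: unif_cost_le hN hNsub Hf.
pose C (sigma : blocking Nsub T) :=
  [set x : R | exists p : {ffun schedule N Nsub T -> R}, is_dist p /\ x = cost p sigma]%classic.
have HCu : forall sigma, C sigma (cost (@unif_dist R N Nsub T) sigma).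
  by move=> sigma; exists (@unif_dist R N Nsub T); split => //; apply: unif_is_dist; lia.
have HClb : forall sigma, lbound (C sigma) (N%:R / 2).
  by move=> sigma x [p [Hp ->]]; apply: cost_lb.
have Hstar : N%:R / 2 <= @Delta_star R N Nsub T alpha.
  apply: (@le_trans _ _ (inf (C sigma0))).
    by apply: lb_le_inf => //; exists (cost (@unif_dist R N Nsub T) sigma0).
  apply: ub_le_sup; last by exists sigma0.
  exists U => d [sigma [Hf ->]].
  apply: (@le_trans _ _ (cost (@unif_dist R N Nsub T) sigma)); last exact: unif_cost_le hN hNsub Hf.
  by apply: ge_inf; [exists (N%:R / 2); exact: HClb | exact: HCu].
have HN2 : 0 < N%:R / 2 :> R by rewrite divr_gt0 // ltr0n.
have HS0 : 0 < @Delta_star R N Nsub T alpha by apply: lt_le_trans Hstar.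
apply: (@le_trans _ _ (U / (N%:R / 2))).
  apply: (@le_trans _ _ (U / @Delta_star R N Nsub T alpha)).
    by apply: ler_wpM2r => //; rewrite invr_ge0 ltW.
  apply: ler_wpM2l => //; rewrite lef_pV2 ?posrE //.
rewrite /U -[X in X <= _]addr0; apply: lerD; last exact: ltW heps.
have HNs' : Nsub%:R - 1 != 0 :> R by rewrite subr_eq0 pnatr_eq1; lia.
have HN' : N%:R != 0 :> R by rewrite pnatr_eq0; lia.
rewrite le_eqVlt; apply/orP; left; apply/eqP; field; by rewrite HNs' HN'.
Qed.
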